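(* Let $a\in(0,1]$, $b>1$, $c\in(0,+\infty)$, and let $\underline F:[0,\infty)\to[0,\infty)$ be defined by $\underline F(s)=c|s^a-1|^{1/a}$ for $s\in[1/b,b]$, $\underline F(s)=\underline F(b)+\kappa(s-b)$ for $s\ge b$, where $\kappa$ is the left derivative at $b$ of $s\mapsto c|s^a-1|^{1/a}$, and $\underline F(s)=s\,\underline F(1/s)$ for $0<s\le 1/b$ (extended by continuity at $0$), so that $\underline F\in\Gamma_0^s(\mathbb{R}_+)$ is linear on $[0,1/b]$ and on $[b,\infty)$. Then for every $s\ge0$, $$\lim_{n\to\infty}T_a^{(n)}(\underline F)(s)=c|s^a-1|^{1/a}.$$
   Context: $\Gamma_0(\mathbb{R}_+)$ is the set of functions $F:[0,\infty)\to[0,\infty]$ that are convex, lower semicontinuous, with $F(1)=0$. For $F\in\Gamma_0(\mathbb{R}_+)$: $\mathrm{rec}(F)(r)=\lim_{\alpha\to\infty}F(1+\alpha r)/\alpha$, $F'_\infty:=\mathrm{rec}(F)(1)$; the perspective function is $\hat F(r,t)=tF(r/t)$ for $t>0$, $\hat F(r,0)=\mathrm{rec}(F)(r)$; the reverse entropy is $R(s)=sF(1/s)$ for $s>0$, $R(0)=F'_\infty$. $\Gamma_0^s(\mathbb{R}_+)$ is the set of $F\in\Gamma_0(\mathbb{R}_+)$ with $F=R$. The marginal perspective function $H_F$ is the lower semicontinuous envelope of $\tilde H_F(r_1,r_2)=\inf_{\theta>0}[\hat F(\theta,r_1)+\hat F(\theta,r_2)]$. For $a\in(0,1]$, $T_a:\Gamma_0(\mathbb{R}_+)\to\Gamma_0^s(\mathbb{R}_+)$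 is $T_a(F)(s)=2^{1/a-1}H_F(1,s)$, and $T_a^{(n)}$ is its $n$-th iterate. *)

(* Defs.v *)
From Stdlib Require Import Reals Lra ClassicalEpsilon.
Open Scope R_scope.

Inductive ER : Type := Fin (x : R) | PInf.

Definition ER_le (u v : ER) : Prop :=
  match u, v with
  | Fin x, Fin y => x <= y
  | _, PInf => True
  | PInf, Fin _ => False
  end.

Definition ER_lt (u v : ER) : Prop := ER_le u v /\ u <> v.

Definition ER_add (u v : ER) : ER :=
  match u, v with Fin x, Fin y => Fin (x + y) | _, _ => PInf end.

Definition ER_scale (t : R) (u : ER) : ER :=
  match u with Fin x => Fin (t * x) | PInf => PInf end.

Definition ER_div (u : ER) (t : R) : ER :=
  match u with Fin x => Fin (x / t) | PInf => PInf end.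

Definition is_glb (S : ER -> Prop) (l : ER) : Prop :=
  (forall v, S v -> ER_le l v) /\ (forall m, (forall v, S v -> ER_le m v) -> ER_le m l).
Definition is_lub (S : ER -> Prop) (l : ER) : Prop :=
  (forall v, S v -> ER_le v l) /\ (forall m, (forall v, S v -> ER_le v m) -> ER_le l m).

Definition ER_inf (S : ER -> Prop) : ER :=
  match excluded_middle_informative (exists l, is_glb S l) with
  | left H => proj1_sig (constructive_indefinite_description _ H)
  | right _ => PInf
  end.
Definition ER_sup (S : ER -> Prop) : ER :=
  match excluded_middle_informative (exists l, is_lub S l) with
  | left H => proj1_sig (constructive_indefinite_description _ H)
  | right _ => PInf
  end.

Definition ER_lim_infty (h : R -> ER) (L : ER) : Prop :=
  match L with
  | Fin l => forall eps, eps > 0 -> exists M, forall al, al > M ->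
               exists x, h al = Fin x /\ Rabs (x - l) < eps
  | PInf => forall K, exists M, forall al, al > M -> ER_lt (Fin K) (h al)
  end.

Definition ER_limit_infty (h : R -> ER) : ER :=
  match excluded_middle_informative (exists L, ER_lim_infty h L) with
  | left H => proj1_sig (constructive_indefinite_description _ H)
  | right _ => PInf
  end.

(** Functions F : [0,oo) -> [0,oo] are represented as R -> ER
    (values at negative arguments are never used). *)

Definition recF (F : R -> ER) (r : R) : ER :=
  ER_limit_infty (fun al => ER_div (F (1 + al * r)) al).

Definition persp (F : R -> ER) (r t : R) : ER :=
  if Rlt_dec 0 t then ER_scale t (F (r / t)) else recF F r.

Definition Htilde (F : R -> ER) (r1 r2 : R) : ER :=
  ER_inf (fun v => exists th, th > 0 /\ v = ER_add (persp F th r1) (persp F th r2)).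

Definition quad (r1 r2 : R) : Prop := 0 <= r1 /\ 0 <= r2.

Definition lsc_quad (g : R -> R -> ER) : Prop :=
  forall x1 x2, quad x1 x2 -> forall t, ER_lt (Fin t) (g x1 x2) ->
    exists d, d > 0 /\ forall y1 y2, quad y1 y2 ->
      Rabs (y1 - x1) < d -> Rabs (y2 - x2) < d -> ER_lt (Fin t) (g y1 y2).

Definition lsc_env (f : R -> R -> ER) (x1 x2 : R) : ER :=
  ER_sup (fun v => exists g : R -> R -> ER, lsc_quad g /\
            (forall y1 y2, quad y1 y2 -> ER_le (g y1 y2) (f y1 y2)) /\
            v = g x1 x2).

Definition HF (F : R -> ER) (r1 r2 : R) : ER := lsc_env (Htilde F) r1 r2.

Definition Ta (a : R) (F : R -> ER) : R -> ER :=
  fun s => ER_scale (Rpower 2 (1 / a - 1)) (HF F 1 s).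

Definition Ta_iter (a : R) (n : nat) (F : R -> ER) : R -> ER := Nat.iter n (Ta a) F.

(** real power with the convention 0^y = 0 (used only for y > 0) *)
Definition rpow (x y : R) : R := if Req_EM_T x 0 then 0 else Rpower x y.

Definition gfun (a c s : R) : R := c * rpow (Rabs (rpow s a - 1)) (1 / a).

Definition left_deriv (f : R -> R) (x l : R) : Prop :=
  forall eps, eps > 0 -> exists d, d > 0 /\ forall h, 0 < h < d ->
    Rabs ((f x - f (x - h)) / h - l) < eps.

Definition ER_seq_cv (u : nat -> ER) (l : R) : Prop :=
  forall eps, eps > 0 -> exists N : nat, forall n, (n >= N)%nat ->
    exists x, u n = Fin x /\ Rabs (x - l) < eps.

(* Main.v *)
Require Import Defs.
From Stdlib Require Import Reals Lra Lia ClassicalEpsilon Classical.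
Open Scope R_scope.

Lemma Rpower_pos x y : 0 < Rpower x y.
Proof. unfold Rpower; apply exp_pos. Qed.

Lemma Rpower_1base y : Rpower 1 y = 1.
Proof. unfold Rpower; rewrite ln_1, Rmult_0_r; apply exp_0. Qed.

Lemma rpow_pos x y : 0 < x -> rpow x y = Rpower x y.
Proof. intros; unfold rpow; destruct Req_EM_T; [lra|auto]. Qed.

Lemma rpow_0 y : rpow 0 y = 0.
Proof. unfold rpow; destruct Req_EM_T; [auto|lra]. Qed.

Lemma rpow_nonneg x y : 0 <= rpow x y.
Proof. unfold rpow; destruct Req_EM_T; [lra|left; apply Rpower_pos]. Qed.

Lemma rpow_gt0 x y : 0 < x -> 0 < rpow x y.
Proof. intros; rewrite rpow_pos; auto; apply Rpower_pos. Qed.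

Lemma rpow_mult x y z : 0 <= x -> 0 <= y -> rpow (x*y) z = rpow x z * rpow y z.
Proof.
  intros hx hy. destruct (Req_dec x 0) as [->|]. rewrite Rmult_0_l, rpow_0; ring.
  destruct (Req_dec y 0) as [->|]. rewrite Rmult_0_r, rpow_0; ring.
  rewrite !rpow_pos; try lra. symmetry; apply Rpower_mult_distr; lra.
  apply Rmult_lt_0_compat; lra.
Qed.

Lemma rpow_rpow x y z : 0 <= x -> rpow (rpow x y) z = rpow x (y*z).
Proof.
  intros hx. destruct (Req_dec x 0) as [->|]. rewrite !rpow_0; auto.
  rewrite (rpow_pos x y), (rpow_pos x); try lra. rewrite rpow_pos; [|apply Rpower_pos].
  apply Rpower_mult.
Qed.

Lemma rpow_1 x : 0 <= x -> rpow x 1 = x.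
Proof. intros hx. destruct (Req_dec x 0) as [->|]. apply rpow_0. rewrite rpow_pos; [apply Rpower_1|]; lra. Qed.

Lemma rpow_plus x y z : rpow x (y+z) = rpow x y * rpow x z.
Proof.
  unfold rpow; destruct Req_EM_T; [ring|]. apply Rpower_plus.
Qed.

Lemma rpow_inv x y : 0 < x -> rpow (/x) y = / rpow x y.
Proof.
  intros; rewrite !rpow_pos; try (apply Rinv_0_lt_compat; lra); auto.
  unfold Rpower; rewrite ln_Rinv; auto. rewrite <- exp_Ropp; f_equal; ring.
Qed.

Lemma rpow_div x y z : 0 <= x -> 0 < y -> rpow (x/y) z = rpow x z / rpow y z.
Proof.
  intros; unfold Rdiv; rewrite rpow_mult, rpow_inv; auto.
  left; apply Rinv_0_lt_compat; lra.
Qed.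

Lemma rpow_le x1 x2 y : 0 <= y -> 0 <= x1 <= x2 -> rpow x1 y <= rpow x2 y.
Proof.
  intros hy [h1 h2]. destruct (Req_dec x1 0) as [->|]. rewrite rpow_0; apply rpow_nonneg.
  rewrite !rpow_pos; try lra. apply Rle_Rpower_l; lra.
Qed.

Lemma rpow_at1 y : rpow 1 y = 1.
Proof. rewrite rpow_pos by lra; apply Rpower_1base. Qed.

Lemma rpow_le1 x y : 0 <= y -> 0 <= x <= 1 -> rpow x y <= 1.
Proof.
  intros. apply Rle_trans with (rpow 1 y); [apply rpow_le; lra| rewrite rpow_at1; lra].
Qed.

Lemma rpow_ge1 x y : 0 <= y -> 1 <= x -> 1 <= rpow x y.
Proof.
  intros. apply Rle_trans with (rpow 1 y); [rewrite rpow_at1; lra|apply rpow_le; lra].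
Qed.

Lemma rpow_lt1 x y : 0 < y -> 0 <= x < 1 -> rpow x y < 1.
Proof.
  intros hy hx. destruct (Req_dec x 0) as [->|]. rewrite rpow_0; lra.
  rewrite rpow_pos by lra. rewrite <- (Rpower_1base y). apply Rlt_Rpower_l; lra.
Qed.


Lemma bernoulli x p : 1 <= p -> 0 <= x -> 1 + p * (x - 1) <= rpow x p.
Proof.
  intros hp hx. destruct (Req_dec x 0) as [->|hx0].
  { rewrite rpow_0; nra. }
  rewrite rpow_pos by lra.
  set (f := fun z => Rpower z p - p * z).
  set (f' := fun z => p * Rpower z (p - 1) - p * 1).
  assert (D : forall z, 0 < z -> derivable_pt_lim f z (f' z)).
  { intros z hz. unfold f, f'. apply (derivable_pt_lim_minus (fun z => Rpower z p) (fun z => p * z)).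
    apply derivable_pt_lim_power; auto.
    apply (derivable_pt_lim_scal id p z 1). apply derivable_pt_lim_id. }
  destruct (Rtotal_order x 1) as [hlt|[heq|hgt]].
  - destruct (MVT_cor2 f f' x 1 hlt) as [cc [E hc]].
    { intros; apply D; lra. }
    unfold f, f' in E. rewrite Rpower_1base in E.
    assert (Rpower cc (p-1) <= 1).
    { apply Rle_trans with (Rpower 1 (p-1)); [apply Rle_Rpower_l; lra| rewrite Rpower_1base; lra]. }
    assert (0 <= (p - p*Rpower cc (p-1))*(1-x)) by (apply Rmult_le_pos; nra).
    nra.
  - subst; rewrite Rpower_1base; lra.
  - destruct (MVT_cor2 f f' 1 x hgt) as [cc [E hc]].
    { intros; apply D; lra. }
    unfold f, f' in E. rewrite Rpower_1base in E.
    assert (1 <= Rpower cc (p-1)).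
    { apply Rle_trans with (Rpower 1 (p-1)); [rewrite Rpower_1base; lra|apply Rle_Rpower_l; lra]. }
    assert (0 <= (p*Rpower cc (p-1) - p)*(x-1)) by (apply Rmult_le_pos; nra).
    nra.
Qed.

Lemma jensen A B l p : 1 <= p -> 0 <= A -> 0 <= B -> 0 < l < 1 ->
  rpow (A+B) p <= rpow A p / rpow l (p-1) + rpow B p / rpow (1-l) (p-1).
Proof.
  intros hp hA hB hl.
  destruct (Req_dec (A+B) 0) as [h0|hS].
  { assert (A = 0) by lra; assert (B = 0) by lra; subst.
    rewrite Rplus_0_r, rpow_0; unfold Rdiv; lra. }
  set (S := A+B). assert (hS' : 0 < S) by (unfold S; lra).
  assert (b1 := bernoulli (A/(l*S)) p hp).
  assert (b2 := bernoulli (B/((1-l)*S)) p hp).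
  assert (p1 : 0 < l*S) by nra. assert (p2 : 0 < (1-l)*S) by nra.
  specialize (b1 (ltac:(apply Rmult_le_pos; [lra| left; apply Rinv_0_lt_compat; lra]))).
  specialize (b2 (ltac:(apply Rmult_le_pos; [lra| left; apply Rinv_0_lt_compat; lra]))).
  rewrite rpow_div, rpow_mult in b1 by lra.
  rewrite rpow_div, rpow_mult in b2 by lra.
  assert (el : rpow l p = l * rpow l (p-1)).
  { replace p with (1 + (p-1)) at 1 by ring. rewrite rpow_plus, rpow_1; lra. }
  assert (el' : rpow (1-l) p = (1-l) * rpow (1-l) (p-1)).
  { replace p with (1 + (p-1)) at 1 by ring. rewrite rpow_plus, rpow_1; lra. }
  rewrite el in b1. rewrite el' in b2.
  assert (q1 : 0 < rpow l (p-1)) by (apply rpow_gt0; lra).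
  assert (q2 : 0 < rpow (1-l) (p-1)) by (apply rpow_gt0; lra).
  assert (qS : 0 < rpow S p) by (apply rpow_gt0; lra).
  set (a1 := rpow A p) in *. set (a2 := rpow B p) in *.
  set (r1 := rpow l (p-1)) in *. set (r2 := rpow (1-l) (p-1)) in *.
  set (s := rpow S p) in *.
  assert (E : l * (a1 / (l * r1 * s)) + (1-l) * (a2 / ((1-l) * r2 * s)) = (a1/r1 + a2/r2) / s).
  { field; repeat split; lra. }
  assert (l * (1 + p * (A / (l * S) - 1)) + (1-l) * (1 + p * (B / ((1 - l) * S) - 1)) = 1).
  { unfold S; field. split; lra. }
  assert (1 <= (a1/r1 + a2/r2) / s) by nra.
  apply Rmult_le_reg_r with (/ s). apply Rinv_0_lt_compat; lra.
  rewrite Rinv_r by lra. unfold Rdiv in *; lra.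
Qed.

Lemma ER_le_trans u v w : ER_le u v -> ER_le v w -> ER_le u w.
Proof. destruct u, v, w; simpl; auto; try lra; tauto. Qed.

Lemma ER_le_PInf u : ER_le u PInf.
Proof. destruct u; simpl; auto. Qed.

Lemma ER_scale_le t u v : 0 < t -> ER_le u v -> ER_le (ER_scale t u) (ER_scale t v).
Proof. destruct u, v; simpl; auto. intros; apply Rmult_le_compat_l; lra. Qed.

Lemma ER_add_le u v u' v' : ER_le u u' -> ER_le v v' -> ER_le (ER_add u v) (ER_add u' v').
Proof. destruct u, v, u', v'; simpl; auto; try tauto; lra. Qed.

Lemma ER_not_le u x : ~ ER_le u (Fin x) -> ER_lt (Fin x) u.
Proof.
  destruct u; simpl; intros H; split; simpl.
  - lra.
  - intros E; inversion E; subst; lra.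
  - auto.
  - discriminate.
Qed.

Lemma ER_sandwich v lo hi : ER_le (Fin lo) v -> ER_le v (Fin hi) ->
  exists x, v = Fin x /\ lo <= x <= hi.
Proof. destruct v; simpl; intros; [exists x; auto| tauto]. Qed.

Lemma ER_inf_ge S w : (forall v, S v -> ER_le w v) -> ER_le w (ER_inf S).
Proof.
  intros H. unfold ER_inf. destruct excluded_middle_informative as [e|e].
  - destruct (constructive_indefinite_description _ e) as [l [h1 h2]]; simpl. apply h2; auto.
  - apply ER_le_PInf.
Qed.

Lemma glb_exists S m : (forall v, S v -> ER_le (Fin m) v) -> exists l, is_glb S l.
Proof.
  intros Hm.
  destruct (classic (exists r, S (Fin r))) as [[r0 Hr0]|Hno].
  - set (E := fun z => S (Fin (- z))).
    assert (hb : bound E).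
    { exists (-m). intros z hz. specialize (Hm _ hz). simpl in Hm. lra. }
    assert (he : exists z, E z). { exists (-r0). unfold E. rewrite Ropp_involutive; auto. }
    destruct (completeness E hb he) as [L [hL1 hL2]].
    exists (Fin (-L)). split.
    + intros v hv. destruct v as [r|]; simpl; auto.
      assert (E (-r)) by (unfold E; rewrite Ropp_involutive; auto).
      specialize (hL1 _ H). lra.
    + intros m' hm'. destruct m' as [z|].
      * simpl. assert (L <= -z).
        { apply hL2. intros w hw. specialize (hm' _ hw). simpl in hm'. lra. }
        lra.
      * specialize (hm' _ Hr0). simpl in hm'. tauto.
  - exists PInf. split.
    + intros v hv. destruct v as [r|]. exfalso; apply Hno; eauto. simpl; auto.
    + intros; apply ER_le_PInf.
Qed.

Lemma ER_inf_le S m v0 : (forall v, S v -> ER_le (Fin m) v) -> S v0 -> ER_le (ER_inf S) v0.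
Proof.
  intros Hm Hv. unfold ER_inf. destruct excluded_middle_informative as [e|e].
  - destruct (constructive_indefinite_description _ e) as [l [h1 h2]]; simpl. apply h1; auto.
  - exfalso; apply e; eapply glb_exists; eauto.
Qed.

Lemma ER_sup_ge S v : S v -> ER_le v (ER_sup S).
Proof.
  intros H. unfold ER_sup. destruct excluded_middle_informative as [e|e].
  - destruct (constructive_indefinite_description _ e) as [l [h1 h2]]; simpl. apply h1; auto.
  - apply ER_le_PInf.
Qed.

Lemma ER_sup_le S v0 M : S v0 -> (forall v, S v -> ER_le v (Fin M)) -> ER_le (ER_sup S) (Fin M).
Proof.
  intros H0 HM. unfold ER_sup. destruct excluded_middle_informative as [e|e].
  - destruct (constructive_indefinite_description _ e) as [l [h1 h2]]; simpl. apply h2; auto.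
  - exfalso; apply e.
    set (E := fun z => S (Fin z)).
    assert (hb : bound E). { exists M. intros z hz. specialize (HM _ hz). simpl in HM. lra. }
    assert (he : exists z, E z).
    { destruct v0 as [r|]. exists r; auto. specialize (HM _ H0); simpl in HM; tauto. }
    destruct (completeness E hb he) as [L [hL1 hL2]].
    exists (Fin L). split.
    + intros v hv. destruct v as [r|].
      * simpl. apply hL1. auto.
      * specialize (HM _ hv); simpl in HM; tauto.
    + intros m' hm'. destruct m' as [z|]; simpl; auto.
      apply hL2. intros w hw. specialize (hm' _ hw). simpl in hm'. auto.
Qed.

Lemma Rdiv_le_0_compat a b : 0 <= a -> 0 < b -> 0 <= a / b.
Proof. intros; unfold Rdiv; apply Rmult_le_pos; [lra| left; apply Rinv_0_lt_compat; lra]. Qed.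

Definition lineb (F : R -> ER) (A B : R) := forall x, 0 <= x -> ER_le (Fin (A + B*x)) (F x).

Lemma recF_ge F A B th : 0 <= th -> lineb F A B -> ER_le (Fin (B*th)) (recF F th).
Proof.
  intros hth HL. unfold recF, ER_limit_infty. destruct excluded_middle_informative as [e|e]; [|apply ER_le_PInf].
  destruct (constructive_indefinite_description _ e) as [L HLim]; simpl.
  destruct L as [l|]; [|exact I]. simpl in *.
  destruct (Rle_dec (B*th) l) as [ok|nok]; auto. exfalso.
  set (eps := (B*th - l)/2). assert (heps : eps > 0) by (unfold eps; lra).
  destruct (HLim eps heps) as [M HM].
  set (al := Rmax M 0 + 1 + Rabs (A+B) / eps).
  assert (hal0 : 0 < al). { unfold al. assert (0 <= Rabs (A+B)/eps) by (apply Rdiv_le_0_compat; [apply Rabs_pos|lra]). assert (0 <= Rmax M 0) by apply Rmax_r. lra. }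
  assert (halM : al > M). { unfold al. assert (0 <= Rabs (A+B)/eps) by (apply Rdiv_le_0_compat; [apply Rabs_pos|lra]). assert (M <= Rmax M 0) by apply Rmax_l. lra. }
  destruct (HM al halM) as [x [Hx Hab]].
  destruct (F (1 + al*th)) eqn:EF; simpl in Hx; [|discriminate].
  injection Hx as Hx. 
  assert (hz := HL (1 + al*th) ltac:(nra)). rewrite EF in hz. simpl in hz.
  assert (x >= (A+B)/al + B*th). { rewrite <- Hx. unfold Rdiv. apply Rle_ge. apply Rmult_le_reg_r with al; auto. field_simplify; nra. }
  assert ((A+B)/al > - eps).
  { assert (Rabs (A+B) / eps < al). { unfold al. assert (0 <= Rmax M 0) by apply Rmax_r. lra. }
    assert (Rabs (A+B) < al * eps). { replace (Rabs (A+B)) with (Rabs (A+B)/eps * eps) by (field; lra). apply Rmult_lt_compat_r; lra. }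
    assert (- (A+B) <= Rabs (A+B)) by (rewrite <- Rabs_Ropp; apply RRle_abs).
    apply Rmult_lt_reg_r with al; auto. field_simplify; lra. }
  apply Rabs_def2 in Hab. unfold eps in *. lra.
Qed.

Lemma persp_ge F A B th y : 0 < th -> 0 <= y -> lineb F A B ->
  ER_le (Fin (A*y + B*th)) (persp F th y).
Proof.
  intros hth hy HL. unfold persp. destruct Rlt_dec as [h|h].
  - assert (H := HL (th/y) ltac:(apply Rdiv_le_0_compat; lra)).
    destruct (F (th/y)); simpl in *; auto.
    replace (A*y + B*th) with (y * (A + B*(th/y))) by (field; lra).
    apply Rmult_le_compat_l; lra.
  - assert (y = 0) by lra. subst. replace (A*0 + B*th) with (B*th) by ring.
    apply (recF_ge F A B); auto; lra.
Qed.

Lemma Htilde_ge F A B A' B' y1 y2 : lineb F A B -> lineb F A' B' -> B + B' = 0 ->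
  0 <= y1 -> 0 <= y2 -> ER_le (Fin (A*y1 + A'*y2)) (Htilde F y1 y2).
Proof.
  intros H1 H2 hB hy1 hy2. unfold Htilde. apply ER_inf_ge.
  intros v [th [hth ->]].
  assert (E1 := persp_ge F A B th y1 hth hy1 H1).
  assert (E2 := persp_ge F A' B' th y2 hth hy2 H2).
  assert (E := ER_add_le _ _ _ _ E1 E2).
  eapply ER_le_trans; [|exact E]. simpl. replace (A * y1 + B * th + (A' * y2 + B' * th)) with (A*y1 + A'*y2 + th*(B+B')) by ring. rewrite hB. lra.
Qed.

Lemma lsc_linear A A' : lsc_quad (fun y1 y2 => Fin (A*y1 + A'*y2)).
Proof.
  intros x1 x2 _ t [Ht Hne]. simpl in Ht.
  assert (hlt : t < A*x1 + A'*x2). { destruct Ht; auto. subst. exfalso; apply Hne; f_equal; auto. }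
  set (K := Rabs A + Rabs A' + 1).
  assert (hK : 0 < K) by (unfold K; assert (0 <= Rabs A) by apply Rabs_pos; assert (0 <= Rabs A') by apply Rabs_pos; lra).
  exists ((A*x1 + A'*x2 - t)/K). split. apply Rdiv_lt_0_compat; lra.
  intros y1 y2 _ h1 h2.
  assert (Rabs (A*(y1-x1) + A'*(y2-x2)) < A*x1 + A'*x2 - t).
  { eapply Rle_lt_trans. apply Rabs_triang. rewrite !Rabs_mult.
    set (d := (A * x1 + A' * x2 - t) / K) in *.
    assert (Rabs A * Rabs (y1 - x1) <= Rabs A * d) by (apply Rmult_le_compat_l; [apply Rabs_pos|lra]).
    assert (Rabs A' * Rabs (y2 - x2) <= Rabs A' * d) by (apply Rmult_le_compat_l; [apply Rabs_pos|lra]).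
    assert (d * K = A * x1 + A' * x2 - t) by (unfold d; field; lra).
    unfold K in H1. assert (0 < d) by (unfold d; apply Rdiv_lt_0_compat; lra). nra. }
  apply Rabs_def2 in H. split; simpl.
  - lra.
  - intros E; injection E; intros; lra.
Qed.

Lemma HF_ge F A A' y1 y2 : quad y1 y2 ->
  (forall z1 z2, quad z1 z2 -> ER_le (Fin (A*z1 + A'*z2)) (Htilde F z1 z2)) ->
  ER_le (Fin (A*y1 + A'*y2)) (HF F y1 y2).
Proof.
  intros hq H. unfold HF, lsc_env. apply ER_sup_ge.
  exists (fun z1 z2 => Fin (A*z1 + A'*z2)). split; [apply lsc_linear|]. split; auto.
Qed.

Lemma Htilde_le F th y : lineb F 0 0 -> th > 0 -> 0 <= y ->
  ER_le (Htilde F 1 y) (ER_add (persp F th 1) (persp F th y)).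
Proof.
  intros H0 hth hy. unfold Htilde. apply (ER_inf_le _ 0).
  - intros v [t [ht ->]].
    assert (E1 := persp_ge F 0 0 t 1 ht ltac:(lra) H0).
    assert (E2 := persp_ge F 0 0 t y ht hy H0).
    assert (E := ER_add_le _ _ _ _ E1 E2).
    eapply ER_le_trans; [|exact E]. simpl. lra.
  - exists th; auto.
Qed.

Lemma HF_le F (Gt : R -> R) x : lineb F 0 0 -> 0 <= x ->
  (forall y, 0 < y -> ER_le (Htilde F 1 y) (Fin (Gt y))) ->
  (forall y, 0 < y < 1 -> Gt y < Gt 0) ->
  ER_le (HF F 1 x) (Fin (Gt x)).
Proof.
  intros H0 hx HT HG. unfold HF, lsc_env.
  apply (ER_sup_le _ (Fin (0*1 + 0*x))).
  - exists (fun z1 z2 => Fin (0*z1 + 0*z2)). split; [apply lsc_linear|]. split; auto.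
    intros z1 z2 [h1 h2]. apply Htilde_ge with 0 0; auto; lra.
  - intros v [g [hg [hmin ->]]].
    destruct (Rlt_dec 0 x) as [hxp|hx0].
    + eapply ER_le_trans; [apply hmin; split; lra|]. apply HT; auto.
    + assert (x = 0) by lra. subst x.
      destruct (classic (ER_le (g 1 0) (Fin (Gt 0)))) as [ok|nok]; auto.
      apply ER_not_le in nok.
      destruct (hg 1 0 ltac:(split; lra) (Gt 0) nok) as [d [hd Hd]].
      set (y := Rmin d 1 / 2).
      assert (hy : 0 < y < 1 /\ y < d).
      { unfold y. assert (Rmin d 1 <= d) by apply Rmin_l. assert (Rmin d 1 <= 1) by apply Rmin_r.
        assert (0 < Rmin d 1) by (apply Rmin_pos; lra). lra. }
      assert (E := Hd 1 y ltac:(split; lra) ltac:(rewrite Rminus_diag, Rabs_R0; lra)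
                     ltac:(rewrite Rminus_0_r, Rabs_right; lra)).
      destruct E as [E _].
      assert (E2 := hmin 1 y ltac:(split; lra)).
      assert (E3 := HT y ltac:(lra)).
      assert (E4 := ER_le_trans _ _ _ (ER_le_trans _ _ _ E E2) E3). simpl in E4.
      assert (Gt y < Gt 0) by (apply HG; lra). lra.
Qed.

Definition sp (q z : R) : R := if Rle_dec 0 z then rpow z q else - rpow (-z) q.

Lemma sp_nonneg q z : 0 <= z -> sp q z = rpow z q.
Proof. intros; unfold sp; destruct Rle_dec; [auto|lra]. Qed.
Lemma sp_neg q z : z < 0 -> sp q z = - rpow (-z) q.
Proof. intros; unfold sp; destruct Rle_dec; [lra|auto]. Qed.
Lemma sp_zero q : sp q 0 = 0.
Proof. rewrite sp_nonneg, rpow_0; lra. Qed.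

Lemma sp_odd q z : sp q (-z) = - sp q z.
Proof.
  destruct (Rtotal_order z 0) as [h|[h|h]].
  - rewrite sp_nonneg by lra; rewrite sp_neg by lra; ring.
  - subst; rewrite Ropp_0, sp_zero; ring.
  - rewrite sp_neg by lra; rewrite sp_nonneg by lra; rewrite Ropp_involutive; ring.
Qed.

Lemma sp_mul q z k : 0 < k -> sp q (z*k) = sp q z * rpow k q.
Proof.
  intros hk. destruct (Rle_dec 0 z).
  - rewrite !sp_nonneg; try nra. apply rpow_mult; lra.
  - rewrite !sp_neg; try nra. replace (- (z*k)) with ((-z)*k) by ring.
    rewrite rpow_mult; lra.
Qed.

Lemma sp_mono q z1 z2 : 0 <= q -> z1 <= z2 -> sp q z1 <= sp q z2.
Proof.
  intros hq h. destruct (Rle_dec 0 z1).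
  - rewrite !sp_nonneg by lra; apply rpow_le; lra.
  - rewrite (sp_neg q z1) by lra. destruct (Rle_dec 0 z2).
    + rewrite sp_nonneg by lra. assert (0 <= rpow z2 q) by apply rpow_nonneg.
      assert (0 <= rpow (-z1) q) by apply rpow_nonneg. lra.
    + rewrite sp_neg by lra. assert (rpow (-z2) q <= rpow (-z1) q) by (apply rpow_le; lra). lra.
Qed.

Lemma sp_abs q z : sp q z * z = rpow (Rabs z) (q+1).
Proof.
  rewrite rpow_plus. destruct (Rle_dec 0 z).
  - rewrite sp_nonneg, Rabs_right, rpow_1; lra.
  - rewrite sp_neg, Rabs_left, rpow_1; lra.
Qed.

Definition ell (a c u x : R) : R :=
  - c * sp (1/a - 1) (u - 1) + c * sp (1/a - 1) (1 - / u) * x.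

Lemma rpow_inv_pow x a : 0 < a -> 0 <= x -> rpow (rpow x a) (1/a) = x.
Proof. intros. rewrite rpow_rpow by lra. replace (a * (1/a)) with 1 by (field; lra). apply rpow_1; auto. Qed.

Lemma support a c u x : 0 < a <= 1 -> 0 < c -> 0 < u -> 0 <= x ->
  ell a c u x <= gfun a c x.
Proof.
  intros ha hc hu hx. unfold ell, gfun.
  set (q := 1/a - 1). set (p := 1/a).
  assert (hp : 1 <= p). { unfold p. apply Rmult_le_reg_r with a; [lra|]. field_simplify; lra. }
  assert (hq : q = p - 1) by (unfold q, p; ring).
  assert (hq0 : 0 <= q) by lra.
  set (y := rpow x a).
  assert (hy : 0 <= y) by apply rpow_nonneg.
  assert (xe : x = rpow y p) by (unfold y, p; rewrite rpow_inv_pow; lra).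
  replace (1 - /u) with ((u-1) * /u) by (field; lra).
  rewrite sp_mul by (apply Rinv_0_lt_compat; lra).
  set (r := rpow (/u) q).
  enough (HH : - sp q (u-1) + sp q (u-1) * r * x <= rpow (Rabs (y-1)) p).
  { apply Rle_trans with (c * (- sp q (u-1) + sp q (u-1) * r * x)); [right; ring| apply Rmult_le_compat_l; lra]. }
  rewrite xe.
  assert (hyp : 0 <= rpow y p) by apply rpow_nonneg.
  assert (habs : 0 <= rpow (Rabs (y-1)) p) by apply rpow_nonneg.
  destruct (Rtotal_order u 1) as [hu1|[hu1|hu1]].
  -
    rewrite sp_neg by lra. replace (-(u-1)) with (1-u) by ring.
    set (K := rpow (1-u) q). assert (hK : 0 < K) by (apply rpow_gt0; lra).
    assert (hr : 1 <= r). { apply rpow_ge1; auto. rewrite <- Rinv_1. apply Rinv_le_contravar; lra. }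
    destruct (Rle_dec y 1).
    + assert (J := jensen (1-y) y (1-u) p hp ltac:(lra) hy ltac:(lra)).
      replace (1 - y + y) with 1 in J by ring. rewrite rpow_at1 in J.
      replace (1 - (1-u)) with u in J by ring. rewrite <- hq in J.
      rewrite Rabs_left1 by lra. replace (- (y-1)) with (1-y) by ring.
      assert (er : r = / rpow u q) by (unfold r; apply rpow_inv; lra).
      fold K in J. rewrite er.
      assert (0 < rpow u q) by (apply rpow_gt0; lra).
      unfold Rdiv in J.
      assert (K * 1 <= K * (rpow (1-y) p * / K + rpow y p * / rpow u q)) by (apply Rmult_le_compat_l; lra).
      replace (K * (rpow (1-y) p * / K + rpow y p * / rpow u q)) with (rpow (1-y) p + K * / rpow u q * rpow y p) in H0 by (field; lra).
      lra.
    + assert (1 <= rpow y p) by (apply rpow_ge1; lra).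
      assert (K <= K * r * rpow y p).
      { rewrite <- (Rmult_1_r K) at 1. rewrite Rmult_assoc. apply Rmult_le_compat_l; [lra|]. nra. }
      lra.
  - rewrite hu1. replace (1-1) with 0 by ring. rewrite sp_zero. lra.
  -
    rewrite sp_nonneg by lra.
    set (K := rpow (u-1) q). assert (hK : 0 < K) by (apply rpow_gt0; lra).
    assert (hr0 : 0 < r) by (apply rpow_gt0; apply Rinv_0_lt_compat; lra).
    assert (hr : r <= 1). { apply rpow_le1; auto. split. left; apply Rinv_0_lt_compat; lra. rewrite <- Rinv_1. apply Rinv_le_contravar; lra. }
    destruct (Rle_dec 1 y).
    + assert (J := jensen (y-1) 1 ((u-1)/u) p hp ltac:(lra) ltac:(lra) ltac:(split; [apply Rdiv_lt_0_compat; lra| apply Rmult_lt_reg_r with u; [lra|]; field_simplify; lra])).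
      replace (y - 1 + 1) with y in J by ring. rewrite rpow_at1 in J.
      replace (1 - (u-1)/u) with (/u) in J by (field; lra). rewrite <- hq in J.
      rewrite rpow_div in J by lra. fold K r in J.
      assert (er : rpow u q = / r). { unfold r; rewrite rpow_inv by lra; rewrite Rinv_inv; auto. }
      rewrite er in J.
      rewrite Rabs_right by lra.
      assert (K * r * rpow y p <= K * r * (rpow (y - 1) p / (K / / r) + 1 / r)).
      { apply Rmult_le_compat_l; [|exact J]. apply Rmult_le_pos; lra. }
      replace (K * r * (rpow (y - 1) p / (K / / r) + 1 / r)) with (rpow (y-1) p + K) in H by (field; lra).
      lra.
    + assert (rpow y p <= 1) by (apply rpow_le1; lra).
      assert (K * r * rpow y p <= K). { assert (r * rpow y p <= 1) by nra. nra. }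
      lra.
Qed.

Lemma Rabs_div x y : Rabs (x / y) = Rabs x / Rabs y.
Proof. unfold Rdiv; rewrite Rabs_mult, Rabs_inv; reflexivity. Qed.

Lemma one_minus_inv u : 0 < u -> 1 - /u = (u-1) * /u.
Proof. intros; field; lra. Qed.

Lemma p_eq a : 1/a = (1/a - 1) + 1.
Proof. ring. Qed.

Lemma touch a c x : 0 < a <= 1 -> 0 < x -> ell a c (rpow x a) x = gfun a c x.
Proof.
  intros ha hx. unfold ell, gfun. set (q := 1/a - 1).
  set (u := rpow x a). assert (hu : 0 < u) by (apply rpow_gt0; lra).
  rewrite one_minus_inv, sp_mul by (try apply Rinv_0_lt_compat; lra).
  assert (xe : x = rpow u (q+1)). { unfold u, q. rewrite <- p_eq, rpow_inv_pow; lra. }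
  assert (E : rpow (/u) q * x = u).
  { rewrite xe, rpow_plus, rpow_1, rpow_inv by lra. field. apply Rgt_not_eq, rpow_gt0; lra. }
  replace (- c * sp q (u - 1) + c * (sp q (u - 1) * rpow (/ u) q) * x) with (c * (sp q (u-1) * (rpow (/u) q * x - 1))) by ring.
  rewrite E, sp_abs. unfold q. rewrite <- p_eq. reflexivity.
Qed.

Lemma ell_sym a c u x : 0 < u -> 0 < x -> x * ell a c (/u) (/x) = ell a c u x.
Proof.
  intros hu hx. unfold ell. set (q := 1/a - 1).
  replace (1 - / / u) with (- (u - 1)) by (rewrite Rinv_inv; ring).
  replace (/u - 1) with (- (1 - /u)) by ring.
  rewrite !sp_odd. field. lra.
Qed.

Lemma gfun_sym a c x : 0 < a <= 1 -> 0 < x -> x * gfun a c (/x) = gfun a c x.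
Proof.
  intros ha hx. unfold gfun. set (p := 1/a).
  set (y := rpow x a). assert (hy : 0 < y) by (apply rpow_gt0; lra).
  rewrite rpow_inv by lra. fold y.
  replace (/y - 1) with ((1 - y) / y) by (field; lra).
  rewrite Rabs_div by lra. rewrite (Rabs_right y) by lra.
  rewrite rpow_div by (try apply Rabs_pos; lra).
  assert (xe : rpow y p = x) by (unfold y, p; apply rpow_inv_pow; lra).
  rewrite xe. rewrite <- Rabs_Ropp. replace (- (1 - y)) with (y - 1) by ring.
  field. lra.
Qed.

Lemma gfun_opt a c y : 0 < a <= 1 -> 0 < y ->
  let th := rpow ((1 + rpow y a)/2) (1/a) in
  0 < th /\ 1 * gfun a c (th/1) + y * gfun a c (th/y) = gfun a c y / Rpower 2 (1/a - 1).
Proof.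
  intros ha hy th. set (z := rpow y a). assert (hz : 0 < z) by (apply rpow_gt0; lra).
  set (m := (1 + z)/2). assert (hm : 0 < m) by (unfold m; lra).
  assert (hth : 0 < th) by (apply rpow_gt0; auto).
  split. auto.
  assert (e1 : rpow (th/1) a = m). { unfold th. pose proof (rpow_gt0 y a hy). rewrite Rdiv_1_r. rewrite rpow_rpow by lra. replace (1/a*a) with 1 by (field; lra). rewrite rpow_1 by lra. unfold m, z; reflexivity. }
  assert (e2 : rpow (th/y) a = m / z).
  { rewrite Rdiv_1_r in e1. rewrite rpow_div by lra. rewrite e1. reflexivity. }
  set (q := 1/a - 1). set (p := 1/a).
  unfold gfun. fold p.
  rewrite e1, e2.
  replace (m - 1) with ((z - 1)/2) by (unfold m; field).
  replace (m/z - 1) with ((1 - z)/(2*z)) by (unfold m; field; lra).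
  rewrite !Rabs_div by lra. rewrite (Rabs_right 2), (Rabs_right (2*z)) by lra.
  rewrite !rpow_div by (try apply Rabs_pos; lra).
  rewrite rpow_mult by lra.
  assert (yz : rpow z p = y) by (unfold z, p; apply rpow_inv_pow; lra).
  rewrite yz.
  assert (e3 : Rabs (1 - z) = Rabs (z - 1)) by (rewrite <- Rabs_Ropp; f_equal; ring).
  rewrite e3.
  assert (e4 : rpow 2 p = 2 * Rpower 2 q).
  { unfold p. rewrite (p_eq a). fold q. rewrite Rplus_comm, rpow_plus, rpow_1 by lra. rewrite rpow_pos by lra. reflexivity. }
  rewrite e4. assert (0 < Rpower 2 q) by apply Rpower_pos.
  fold z. field. split; lra.
Qed.

Lemma gfun_0 a c : 0 < a -> gfun a c 0 = c.
Proof.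
  intros. unfold gfun. rewrite rpow_0. rewrite Rabs_left by lra.
  replace (- (0 - 1)) with 1 by ring. rewrite rpow_at1. ring.
Qed.

Lemma gfun_lt a c y : 0 < a <= 1 -> 0 < c -> 0 < y < 1 -> gfun a c y < c.
Proof.
  intros ha hc hy. unfold gfun.
  assert (rpow y a < 1) by (apply rpow_lt1; lra).
  assert (0 < rpow y a) by (apply rpow_gt0; lra).
  assert (rpow (Rabs (rpow y a - 1)) (1/a) < 1).
  { apply rpow_lt1. apply Rdiv_lt_0_compat; lra. rewrite Rabs_left by lra. lra. }
  nra.
Qed.

Lemma gfun_nonneg a c y : 0 < c -> 0 <= gfun a c y.
Proof. intros; unfold gfun; apply Rmult_le_pos; [lra|apply rpow_nonneg]. Qed.

Definition alpha a c u := - c * sp (1/a - 1) (u - 1).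
Definition beta a c u := c * sp (1/a - 1) (1 - /u).

Lemma ell_ab a c u x : ell a c u x = alpha a c u + beta a c u * x.
Proof. unfold ell, alpha, beta; ring. Qed.

Lemma step_beta a c w : 0 < w ->
  beta a c ((1+w)/2) + beta a c ((1 + /w)/2) = 0.
Proof.
  intros hw. unfold beta.
  replace (1 - / ((1 + / w) / 2)) with (- (1 - / ((1 + w)/2))) by (field; lra).
  rewrite sp_odd. ring.
Qed.

Lemma step_alpha a c w x : 0 < w ->
  Rpower 2 (1/a - 1) * (alpha a c ((1+w)/2) * 1 + alpha a c ((1 + /w)/2) * x) = ell a c w x.
Proof.
  intros hw. unfold alpha, ell. set (q := 1/a - 1).
  replace ((1+w)/2 - 1) with ((w - 1) * /2) by field.
  replace ((1 + /w)/2 - 1) with (- (w-1) * /(2*w)) by (field; lra).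
  replace (1 - /w) with ((w-1) * /w) by (field; lra).
  rewrite !sp_mul by (apply Rinv_0_lt_compat; lra).
  rewrite sp_odd.
  rewrite Rinv_mult, rpow_mult by (left; apply Rinv_0_lt_compat; lra).
  rewrite rpow_inv by lra. rewrite (rpow_pos 2) by lra.
  assert (0 < Rpower 2 q) by apply Rpower_pos.
  field. lra.
Qed.

Lemma step_range X w : 1 < X -> / (2*X - 1) < w < 2*X - 1 ->
  / X < (1+w)/2 < X /\ / X < (1 + /w)/2 < X.
Proof.
  intros hX [h1 h2].
  assert (h0 : 0 < / (2*X-1)) by (apply Rinv_0_lt_compat; lra).
  assert (hw : 0 < w) by lra.
  assert (key : / X <= (1 + / (2*X - 1))/2).
  { apply Rmult_le_reg_r with (2 * X * (2*X-1)). nra. field_simplify; try lra. nra. }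
  assert (hiw : / (2*X-1) < / w < 2*X - 1).
  { split. apply Rinv_lt_contravar; nra.
    rewrite <- (Rinv_inv (2*X-1)). apply Rinv_lt_contravar; auto. apply Rmult_lt_0_compat; auto. }
  split; split; lra.
Qed.

Definition Inv a c X (F : R -> ER) :=
  (forall x, 0 <= x -> ER_le (F x) (Fin (gfun a c x))) /\
  (forall u, / X < u < X -> lineb F (alpha a c u) (beta a c u)).

Lemma alpha_1 a c : alpha a c 1 = 0.
Proof. unfold alpha. replace (1-1) with 0 by ring. rewrite sp_zero; ring. Qed.
Lemma beta_1 a c : beta a c 1 = 0.
Proof. unfold beta. replace (1 - /1) with 0 by (rewrite Rinv_1; ring). rewrite sp_zero; ring. Qed.

Lemma Inv_nonneg a c X F : 1 < X -> Inv a c X F -> lineb F 0 0.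
Proof.
  intros hX [_ H]. replace (lineb F 0 0) with (lineb F (alpha a c 1) (beta a c 1)) by (rewrite alpha_1, beta_1; auto). apply H.
  split; [|lra]. rewrite <- Rinv_1. apply Rinv_lt_contravar; lra.
Qed.

Lemma persp_le F th y g : 0 < y -> ER_le (F (th/y)) (Fin g) -> ER_le (persp F th y) (Fin (y * g)).
Proof.
  intros hy H. unfold persp. destruct Rlt_dec; [|lra].
  destruct (F (th/y)); simpl in *; [apply Rmult_le_compat_l; lra| tauto].
Qed.

Lemma Inv_step a c X F : 0 < a <= 1 -> 0 < c -> 1 < X -> Inv a c X F -> Inv a c (2*X - 1) (Ta a F).
Proof.
  intros ha hc hX HI.
  assert (H0 := Inv_nonneg a c X F hX HI).
  destruct HI as [HU HL].
  set (K := Rpower 2 (1/a - 1)). assert (hK : 0 < K) by apply Rpower_pos.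
  split.
  - intros x hx. unfold Ta. fold K.
    assert (E : ER_le (HF F 1 x) (Fin (gfun a c x / K))).
    { apply (HF_le F (fun y => gfun a c y / K)); auto.
      - intros y hy. destruct (gfun_opt a c y ha hy) as [hth Heq]. fold K in Heq.
        set (th := rpow ((1 + rpow y a) / 2) (1 / a)) in *.
        eapply ER_le_trans. apply (Htilde_le F th y H0 hth); lra.
        assert (E1 := persp_le F th 1 (gfun a c (th/1)) ltac:(lra) (HU (th/1) ltac:(apply Rdiv_le_0_compat; lra))).
        assert (E2 := persp_le F th y (gfun a c (th/y)) hy (HU (th/y) ltac:(apply Rdiv_le_0_compat; lra))).
        assert (E := ER_add_le _ _ _ _ E1 E2). eapply ER_le_trans; [exact E|]. simpl. lra.
      - intros y hy. rewrite gfun_0 by lra. assert (gfun a c y < c) by (apply gfun_lt; auto).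
        unfold Rdiv; apply Rmult_lt_compat_r; [apply Rinv_0_lt_compat|]; lra. }
    assert (E' := ER_scale_le K _ _ hK E). simpl in E'. replace (K * (gfun a c x / K)) with (gfun a c x) in E' by (field; lra). exact E'.
  - intros w hw x hx.
    assert (hw0 : 0 < w). { assert (0 < / (2*X-1)) by (apply Rinv_0_lt_compat; lra). lra. }
    destruct (step_range X w hX hw) as [r1 r2].
    assert (E : ER_le (Fin (alpha a c ((1+w)/2) * 1 + alpha a c ((1 + /w)/2) * x)) (HF F 1 x)).
    { apply HF_ge. split; lra.
      intros z1 z2 [h1 h2]. apply Htilde_ge with (beta a c ((1+w)/2)) (beta a c ((1 + /w)/2)); auto.
      apply step_beta; auto. }
    unfold Ta. assert (E' := ER_scale_le K _ _ hK E). fold K.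
    eapply ER_le_trans; [|exact E']. simpl.
    unfold K. rewrite step_alpha by auto. rewrite ell_ab. lra.
Qed.

Lemma rpow_lt x1 x2 y : 0 < y -> 0 <= x1 < x2 -> rpow x1 y < rpow x2 y.
Proof.
  intros hy [h1 h2]. destruct (Req_dec x1 0) as [->|].
  rewrite rpow_0; apply rpow_gt0; lra.
  rewrite !rpow_pos by lra. apply Rlt_Rpower_l; lra.
Qed.

Lemma beta_mono a c u v : 0 < a <= 1 -> 0 < c -> 0 < u <= v -> beta a c u <= beta a c v.
Proof.
  intros ha hc huv. unfold beta. apply Rmult_le_compat_l; [lra|]. apply sp_mono.
  { apply Rmult_le_reg_r with a; [lra|]. unfold Rminus; rewrite Rmult_plus_distr_r.
    replace (1/a*a) with 1 by (field; lra). lra. }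
  assert (/v <= /u) by (apply Rinv_le_contravar; lra). lra.
Qed.

Lemma lim_lower (f : R -> ER) l0 A B d0 : d0 > 0 ->
  (forall eps, eps > 0 -> exists d, d > 0 /\ forall s, 0 < s < d -> exists x, f s = Fin x /\ Rabs (x - l0) < eps) ->
  (forall s, 0 < s < d0 -> forall x, f s = Fin x -> A + B*s <= x) -> A <= l0.
Proof.
  intros hd0 Hl Hb. destruct (Rle_dec A l0) as [ok|nok]; auto. exfalso.
  set (eps := (A - l0)/2). assert (heps : eps > 0) by (unfold eps; lra).
  destruct (Hl eps heps) as [d [hd Hd]].
  set (s := Rmin (Rmin d d0) (eps / (Rabs B + 1)) / 2).
  assert (hB : 0 < Rabs B + 1) by (assert (0 <= Rabs B) by apply Rabs_pos; lra).
  assert (h1 : 0 < eps / (Rabs B + 1)) by (apply Rdiv_lt_0_compat; lra).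
  assert (hs : 0 < s /\ s < d /\ s < d0 /\ s < eps / (Rabs B + 1)).
  { unfold s. assert (Rmin (Rmin d d0) (eps / (Rabs B + 1)) <= Rmin d d0) by apply Rmin_l.
    assert (Rmin (Rmin d d0) (eps / (Rabs B + 1)) <= eps / (Rabs B + 1)) by apply Rmin_r.
    assert (Rmin d d0 <= d) by apply Rmin_l. assert (Rmin d d0 <= d0) by apply Rmin_r.
    assert (0 < Rmin d d0) by (apply Rmin_pos; lra).
    assert (0 < Rmin (Rmin d d0) (eps / (Rabs B + 1))) by (apply Rmin_pos; lra). lra. }
  destruct (Hd s ltac:(lra)) as [x [Hx Hab]].
  assert (Hb' := Hb s ltac:(lra) x Hx).
  assert (Rabs B * s < eps).
  { assert (s * (Rabs B + 1) < eps).
    { replace eps with (eps / (Rabs B + 1) * (Rabs B + 1)) by (field; lra).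
      apply Rmult_lt_compat_r; lra. }
    nra. }
  assert (- (Rabs B * s) <= B * s).
  { assert (- Rabs B <= B) by (rewrite <- Rabs_Ropp; assert (HH := RRle_abs (-B)); lra). nra. }
  apply Rabs_def2 in Hab. unfold eps in *. lra.
Qed.

Lemma lim_upper (f : R -> ER) l0 A d0 : d0 > 0 ->
  (forall eps, eps > 0 -> exists d, d > 0 /\ forall s, 0 < s < d -> exists x, f s = Fin x /\ Rabs (x - l0) < eps) ->
  (forall s, 0 < s < d0 -> forall x, f s = Fin x -> x <= A) -> l0 <= A.
Proof.
  intros hd0 Hl Hb. destruct (Rle_dec l0 A) as [ok|nok]; auto. exfalso.
  set (eps := (l0 - A)/2). assert (heps : eps > 0) by (unfold eps; lra).
  destruct (Hl eps heps) as [d [hd Hd]].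
  set (s := Rmin d d0 / 2).
  assert (hs : 0 < s /\ s < d /\ s < d0).
  { unfold s. assert (Rmin d d0 <= d) by apply Rmin_l. assert (Rmin d d0 <= d0) by apply Rmin_r.
    assert (0 < Rmin d d0) by (apply Rmin_pos; lra). lra. }
  destruct (Hd s ltac:(lra)) as [x [Hx Hab]].
  assert (Hb' := Hb s ltac:(lra) x Hx).
  apply Rabs_def2 in Hab. unfold eps in *. lra.
Qed.

Section Base.
Variables (a b c kappa : R) (Fb : R -> ER).
Hypotheses (ha : 0 < a <= 1) (hb : b > 1) (hc : c > 0)
  (hkappa : left_deriv (gfun a c) b kappa)
  (hmid : forall s, / b <= s <= b -> Fb s = Fin (gfun a c s))
  (hright : forall s, s >= b -> Fb s = Fin (gfun a c b + kappa * (s - b)))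
  (hleft : forall s, 0 < s <= / b -> Fb s = ER_scale s (Fb (/ s)))
  (hzero : exists l0, Fb 0 = Fin l0 /\
     forall eps, eps > 0 -> exists d, d > 0 /\ forall s, 0 < s < d ->
       exists x, Fb s = Fin x /\ Rabs (x - l0) < eps).

Let X0 := rpow b a.

Lemma X0_gt1 : 1 < X0.
Proof. unfold X0. rewrite <- (rpow_at1 a). apply rpow_lt; lra. Qed.

Lemma p_pos : 0 < 1/a.
Proof. apply Rdiv_lt_0_compat; lra. Qed.

Lemma kappa_le : kappa <= beta a c X0.
Proof.
  destruct (Rle_dec kappa (beta a c X0)) as [ok|nok]; auto. exfalso.
  set (eps := kappa - beta a c X0). assert (heps : eps > 0) by (unfold eps; lra).
  destruct (hkappa eps heps) as [d [hd Hd]].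
  set (h := Rmin d (b-1) / 2).
  assert (hh : 0 < h < d /\ h < b - 1).
  { unfold h. assert (Rmin d (b-1) <= d) by apply Rmin_l. assert (Rmin d (b-1) <= b-1) by apply Rmin_r.
    assert (0 < Rmin d (b-1)) by (apply Rmin_pos; lra). lra. }
  specialize (Hd h ltac:(lra)). apply Rabs_def2 in Hd.
  assert (S1 := support a c X0 (b-h) ha hc ltac:(generalize X0_gt1; lra) ltac:(lra)).
  assert (T1 := touch a c b ha ltac:(lra)). fold X0 in T1.
  rewrite !ell_ab in *.
  assert ((gfun a c b - gfun a c (b-h)) / h <= beta a c X0).
  { apply Rmult_le_reg_r with h; [lra|]. unfold Rdiv. rewrite Rmult_assoc, Rinv_l by lra. nra. }
  unfold eps in *. lra.
Qed.

Lemma kappa_ge u : / X0 < u < X0 -> beta a c u <= kappa.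
Proof.
  intros hu. assert (hX := X0_gt1). assert (hp := p_pos).
  assert (hu0 : 0 < u). { assert (0 < /X0) by (apply Rinv_0_lt_compat; lra). lra. }
  set (t0 := rpow u (1/a)).
  assert (ht0 : t0 < b).
  { unfold t0. replace b with (rpow X0 (1/a)) by (unfold X0; apply rpow_inv_pow; lra).
    apply rpow_lt; lra. }
  assert (ht00 : 0 < t0) by (apply rpow_gt0; lra).
  destruct (Rle_dec (beta a c u) kappa) as [ok|nok]; auto. exfalso.
  set (eps := beta a c u - kappa). assert (heps : eps > 0) by (unfold eps; lra).
  destruct (hkappa eps heps) as [d [hd Hd]].
  set (h := Rmin d (b-t0) / 2).
  assert (hh : 0 < h < d /\ h < b - t0).
  { unfold h. assert (Rmin d (b-t0) <= d) by apply Rmin_l. assert (Rmin d (b-t0) <= b-t0) by apply Rmin_r.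
    assert (0 < Rmin d (b-t0)) by (apply Rmin_pos; lra). lra. }
  specialize (Hd h ltac:(lra)). apply Rabs_def2 in Hd.
  set (v := rpow (b-h) a).
  assert (hv : u < v).
  { unfold v. replace u with (rpow t0 a) by (unfold t0; rewrite rpow_rpow by lra; replace (1/a*a) with 1 by (field; lra); apply rpow_1; lra).
    apply rpow_lt; lra. }
  assert (S1 := support a c v b ha hc ltac:(lra) ltac:(lra)).
  assert (T1 := touch a c (b-h) ha ltac:(lra)). fold v in T1.
  rewrite !ell_ab in *.
  assert (BM := beta_mono a c u v ha hc ltac:(lra)).
  assert (beta a c v <= (gfun a c b - gfun a c (b-h)) / h).
  { apply Rmult_le_reg_r with h; [lra|]. unfold Rdiv. rewrite Rmult_assoc, Rinv_l by lra. nra. }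
  unfold eps in *. lra.
Qed.

Lemma inv_range u : / X0 < u < X0 -> / X0 < / u < X0.
Proof.
  intros hu. assert (hX := X0_gt1).
  assert (hu0 : 0 < u). { assert (0 < /X0) by (apply Rinv_0_lt_compat; lra). lra. }
  assert (0 < /X0) by (apply Rinv_0_lt_compat; lra).
  split. apply Rinv_lt_contravar; nra.
  rewrite <- (Rinv_inv X0). apply Rinv_lt_contravar; [|lra]. apply Rmult_lt_0_compat; lra.
Qed.

Lemma Fb_right x : x >= b -> exists v, Fb x = Fin v /\ v <= gfun a c x /\
  forall u, / X0 < u < X0 -> ell a c u x <= v.
Proof.
  intros hx. exists (gfun a c b + kappa * (x - b)). split; [apply hright; auto|]. split.
  - assert (hX := X0_gt1).
    assert (S1 := support a c X0 x ha hc ltac:(lra) ltac:(lra)).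
    assert (T1 := touch a c b ha ltac:(lra)). fold X0 in T1.
    rewrite !ell_ab in *. assert (K := kappa_le). nra.
  - intros u hu. assert (hu0 : 0 < u). { assert (0 < /X0) by (apply Rinv_0_lt_compat; generalize X0_gt1; lra). lra. }
    assert (S1 := support a c u b ha hc hu0 ltac:(lra)).
    rewrite !ell_ab in *. assert (K := kappa_ge u hu).
    replace (alpha a c u + beta a c u * x) with (alpha a c u + beta a c u * b + beta a c u * (x - b)) by ring.
    assert (beta a c u * (x - b) <= kappa * (x - b)) by (apply Rmult_le_compat_r; lra). lra.
Qed.

Lemma Fb_pos x : 0 < x -> exists v, Fb x = Fin v /\ v <= gfun a c x /\
  forall u, / X0 < u < X0 -> ell a c u x <= v.
Proof.
  intros hx. assert (hX := X0_gt1).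
  destruct (Rle_dec b x) as [h1|h1]. apply Fb_right; lra.
  destruct (Rle_dec (/b) x) as [h2|h2].
  - exists (gfun a c x). split. apply hmid; lra. split; [lra|].
    intros u hu. apply support; auto. assert (0 < /X0) by (apply Rinv_0_lt_compat; lra). lra. lra.
  - assert (hx' : / x >= b).
    { rewrite <- (Rinv_inv b). apply Rle_ge, Rinv_le_contravar; lra. }
    destruct (Fb_right (/x) hx') as [v [E [Hu Hl]]].
    exists (x * v). split. rewrite hleft by lra. rewrite E. reflexivity. split.
    + rewrite <- gfun_sym by auto. apply Rmult_le_compat_l; lra.
    + intros u hu. assert (hu0 : 0 < u). { assert (0 < /X0) by (apply Rinv_0_lt_compat; lra). lra. }
      rewrite <- ell_sym by auto. apply Rmult_le_compat_l; [lra|]. apply Hl. apply inv_range; auto.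
Qed.

Lemma Inv_base : Inv a c X0 Fb.
Proof.
  assert (hX := X0_gt1). destruct hzero as [l0 [E0 Hl0]].
  split.
  - intros x hx. destruct (Req_dec x 0) as [->|hx0].
    + rewrite E0. simpl. rewrite gfun_0 by lra.
      apply (lim_upper Fb l0 c 1); auto; [lra|].
      intros s hs v Ev. destruct (Fb_pos s ltac:(lra)) as [v' [Ev' [Hu _]]].
      rewrite Ev in Ev'; injection Ev' as <-. assert (gfun a c s < c) by (apply gfun_lt; auto; lra). lra.
    + destruct (Fb_pos x ltac:(lra)) as [v [Ev [Hu _]]]. rewrite Ev. simpl; auto.
  - intros u hu x hx. destruct (Req_dec x 0) as [->|hx0].
    + rewrite E0. simpl. rewrite Rmult_0_r, Rplus_0_r.
      apply (lim_lower Fb l0 (alpha a c u) (beta a c u) 1); auto; [lra|].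
      intros s hs v Ev. destruct (Fb_pos s ltac:(lra)) as [v' [Ev' [_ Hl]]].
      rewrite Ev in Ev'; injection Ev' as <-. rewrite <- ell_ab. apply Hl; auto.
    + destruct (Fb_pos x ltac:(lra)) as [v [Ev [_ Hl]]]. rewrite Ev. simpl. rewrite <- ell_ab. apply Hl; auto.
Qed.

End Base.

Fixpoint Xs (X0 : R) (n : nat) : R := match n with O => X0 | S n => 2 * Xs X0 n - 1 end.

Lemma Xs_gt1 X0 n : 1 < X0 -> 1 < Xs X0 n.
Proof. intros h; induction n; simpl; lra. Qed.

Lemma Xs_ge X0 n : 1 < X0 -> X0 <= Xs X0 n.
Proof. intros h; induction n; simpl; [lra|]. lra. Qed.

Lemma Xs_lin X0 n : 1 < X0 -> 1 + INR n * (X0 - 1) <= Xs X0 n.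
Proof.
  intros h; induction n; simpl Xs. simpl; lra.
  rewrite S_INR. assert (0 <= INR n) by apply pos_INR. assert (X0 <= Xs X0 n) by (apply Xs_ge; auto). lra.
Qed.

Lemma Xs_mono X0 N k : 1 < X0 -> Xs X0 N <= Xs X0 (k + N).
Proof.
  intros h; induction k; simpl. lra. assert (1 < Xs X0 (k+N)) by (apply Xs_gt1; auto). lra.
Qed.

Lemma Xs_unb X0 M : 1 < X0 -> exists N, M < Xs X0 N.
Proof.
  intros h. destruct (INR_unbounded ((M - 1)/(X0 - 1))) as [N hN]. exists N.
  assert (H := Xs_lin X0 N h).
  assert (INR N * (X0 - 1) > M - 1).
  { apply Rmult_lt_reg_r with (/ (X0-1)). apply Rinv_0_lt_compat; lra.
    rewrite Rmult_assoc, Rinv_r by lra. unfold Rdiv in hN. lra. }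
  lra.
Qed.

Lemma Inv_mono a c X X' F : 1 < X' <= X -> Inv a c X F -> Inv a c X' F.
Proof.
  intros hX [H1 H2]. split; auto. intros u hu. apply H2.
  assert (/X <= /X') by (apply Rinv_le_contravar; lra). lra.
Qed.

Lemma rpow_low z q : 0 < z <= 1 -> 0 <= q -> 1 - q * (1 - z) / z <= rpow z q.
Proof.
  intros hz hq. rewrite rpow_pos by lra. unfold Rpower.
  assert (E := exp_ineq1_le (q * ln z)).
  assert (L := exp_ineq1_le (ln (/z))). rewrite exp_ln in L by (apply Rinv_0_lt_compat; lra).
  rewrite ln_Rinv in L by lra.
  assert (q * (1 - /z) <= q * ln z) by (apply Rmult_le_compat_l; lra).
  replace (q * (1 - z) / z) with (- (q * (1 - / z))) by (field; lra). lra.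
Qed.

Theorem mainTheorem11 (a b c kappa : R) (Fb : R -> ER)
  (ha : 0 < a <= 1) (hb : b > 1) (hc : c > 0)
  (hkappa : left_deriv (gfun a c) b kappa)
  (hmid : forall s, / b <= s <= b -> Fb s = Fin (gfun a c s))
  (hright : forall s, s >= b -> Fb s = Fin (gfun a c b + kappa * (s - b)))
  (hleft : forall s, 0 < s <= / b -> Fb s = ER_scale s (Fb (/ s)))
  (hzero : exists l0, Fb 0 = Fin l0 /\
     forall eps, eps > 0 -> exists d, d > 0 /\ forall s, 0 < s < d ->
       exists x, Fb s = Fin x /\ Rabs (x - l0) < eps) :
  forall s, 0 <= s -> ER_seq_cv (fun n => Ta_iter a n Fb s) (gfun a c s).
Proof.
  intros s hs eps heps.
  set (X0 := rpow b a).
  assert (hX0 : 1 < X0) by (unfold X0; rewrite <- (rpow_at1 a); apply rpow_lt; lra).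
  assert (HI : forall n, Inv a c (Xs X0 n) (Ta_iter a n Fb)).
  { induction n. simpl. apply (Inv_base a b c kappa Fb); auto.
    simpl Xs. change (Ta_iter a (S n) Fb) with (Ta a (Ta_iter a n Fb)).
    apply Inv_step; auto. apply Xs_gt1; auto. }
  assert (HIN : forall N n, (n >= N)%nat -> Inv a c (Xs X0 N) (Ta_iter a n Fb)).
  { intros N n hn. replace n with ((n - N) + N)%nat by lia.
    apply Inv_mono with (Xs X0 ((n-N)+N)); [|apply HI]. split. apply Xs_gt1; auto. apply Xs_mono; auto. }
  set (q := 1/a - 1).
  assert (hq : 0 <= q). { unfold q. apply Rmult_le_reg_r with a; [lra|]. unfold Rminus; rewrite Rmult_plus_distr_r.
    replace (1/a*a) with 1 by (field; lra). lra. }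
  destruct (Req_dec s 0) as [->|hs0].
  - destruct (Xs_unb X0 (Rmax 4 (4 * c * q / eps)) hX0) as [N hN]. exists N. intros n hn.
    destruct (HIN N n hn) as [HU HL].
    set (X := Xs X0 N) in *.
    assert (h4 : 4 <= Rmax 4 (4 * c * q / eps)) by apply Rmax_l.
    assert (h5 : 4 * c * q / eps <= Rmax 4 (4 * c * q / eps)) by apply Rmax_r.
    set (u := 2 / X).
    assert (hu : / X < u < X).
    { unfold u. assert (0 < /X) by (apply Rinv_0_lt_compat; lra). split. unfold Rdiv; lra.
      apply Rmult_lt_reg_r with X; [lra|]. unfold Rdiv. rewrite Rmult_assoc, Rinv_l by lra. nra. }
    assert (hu2 : 0 < u <= 1/2).
    { unfold u. split. apply Rdiv_lt_0_compat; lra. apply Rmult_le_reg_r with X; [lra|]. unfold Rdiv. rewrite Rmult_assoc, Rinv_l by lra. lra. }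
    assert (L := HL u hu 0 ltac:(lra)). assert (U := HU 0 ltac:(lra)).
    destruct (ER_sandwich _ _ _ L U) as [x [Ex [lo hi]]]. exists x. split; auto.
    rewrite gfun_0 in * by lra.
    unfold alpha in lo. rewrite Rmult_0_r, Rplus_0_r in lo. fold q in lo.
    rewrite sp_neg in lo by lra. replace (- (u - 1)) with (1 - u) in lo by ring.
    assert (R := rpow_low (1-u) q ltac:(lra) hq).
    assert (q * (1 - (1-u)) / (1-u) <= 2 * q * u).
    { apply Rmult_le_reg_r with (1-u); [lra|]. unfold Rdiv. rewrite Rmult_assoc, Rinv_l by lra. assert (0 <= q*u*(1-2*u)) by (apply Rmult_le_pos; [apply Rmult_le_pos|]; lra). nra. }
    assert (c * q * u * 2 < eps).
    { unfold u. apply Rmult_lt_reg_r with X; [lra|]. unfold Rdiv.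
      replace (c * q * (2 * / X) * 2 * X) with (4 * c * q) by (field; lra).
      assert (HX4 : 4 * c * q / eps < X) by lra.
      apply Rmult_lt_reg_r with (/eps). apply Rinv_0_lt_compat; lra.
      replace (eps * X * / eps) with X by (field; lra). unfold Rdiv in HX4. lra. }
    assert (c * (1 - 2*q*u) <= c * rpow (1-u) q) by (apply Rmult_le_compat_l; lra).
    rewrite Rabs_left1 by lra. lra.
  - assert (hsp : 0 < s) by lra.
    set (u := rpow s a). assert (hu0 : 0 < u) by (apply rpow_gt0; lra).
    destruct (Xs_unb X0 (Rmax u (/u)) hX0) as [N hN]. exists N. intros n hn.
    destruct (HIN N n hn) as [HU HL].
    set (X := Xs X0 N) in *.
    assert (h1 : u <= Rmax u (/u)) by apply Rmax_l. assert (h2 : /u <= Rmax u (/u)) by apply Rmax_r.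
    assert (hu : / X < u < X).
    { split; [|lra]. rewrite <- (Rinv_inv u). apply Rinv_lt_contravar; [|lra].
      apply Rmult_lt_0_compat; [apply Rinv_0_lt_compat; lra|]. assert (0 < /u) by (apply Rinv_0_lt_compat; lra). lra. }
    assert (L := HL u hu s hs). assert (U := HU s hs).
    rewrite <- ell_ab in L. unfold u in L. rewrite touch in L by lra.
    destruct (ER_sandwich _ _ _ L U) as [x [Ex [lo hi]]]. exists x. split; auto.
    replace (x - gfun a c s) with 0 by lra. rewrite Rabs_R0; lra.
Qed.
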